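(* For $u_1,\dots,u_k\in\mathcal B$ let $R'(u_1,\dots,u_k)=\sum_{n=0}^\infty\sum_{j\in\{1,\dots,k\}^n}R'[u_{j(1)},\dots,u_{j(n)}]$ (formal series). Then for every $v\in\mathcal B$, $R'(u_1,\dots,u_k)v=v+R'(u_1,\dots,u_k)\Big(\gamma\Big[\big(\textstyle\sum_{i=1}^ku_i\big)\,R'(u_1,\dots,u_k)\big(\textstyle\sum_{j=1}^ku_j\big)\Big]v\Big)+R'(u_1,\dots,u_k)\Big(\textstyle\sum_{i=1}^k\Lambda(u_i\otimes v)\Big)$, as formal series.
   Context: Let $\mathcal B$ be a unital $*$-algebra with star-linear maps $\gamma:\mathcal B\to\mathcal B$ and $\Lambda:\mathcal B\otimes_{alg}\mathcal B\to\mathcal B$. The linear operators $R'[u_1,\dots,u_m]$ on $\mathcal B$ ($m\ge0$) are defined recursively: $R'[\emptyset]=\mathrm{id}_{\mathcal B}$, and $R'[u_1,\dots,u_m]=\sum_{\pi\in\mathrm{Int}(m)}w(V_1)\circ\cdots\circ w(V_r)$, where $\mathrm{Int}(m)$ is the set of interval partitions of $\{1,\dots,m\}$, $V_1,\dots,V_r$ are the blocks of $\pi$ from left to right, $w(\{i\})$ is $v\mapsto\Lambda(u_i\otimes v)$, and for a block $V=\{p,\dots,q\}$ with $q>p$, $w(V)$ is left multiplication by $\gamma\big[u_p\,R'[u_{p+1},\dots,u_{q-1}](u_q)\big]$. *)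

(* Defs.v *)
From HB Require Import structures.
From mathcomp Require Import all_boot all_order all_algebra.
Set Implicit Arguments. Unset Strict Implicit. Unset Printing Implicit Defensive.
Import Order.TTheory GRing.Theory Num.Theory.
Local Open Scope ring_scope.

(* ---------- Interval partitions of {1,...,m} ----------
   An interval partition is encoded by the list of the sizes of its blocks,
   read from left to right (a composition of m). *)

Fixpoint allseqs (len m : nat) : seq (seq nat) :=
  match len with
  | 0 => [:: [::]]
  | len'.+1 => flatten [seq [seq p :: c | c <- allseqs len' m] | p <- iota 1 m]
  end.

Definition intpart (m : nat) : seq (seq nat) :=
  [seq c <- flatten [seq allseqs l m | l <- iota 0 m.+1] | sumn c == m].

Fixpoint blocks (T : Type) (c : seq nat) (s : seq T) : seq (seq T) :=
  match c with
  | [::] => [::]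
  | p :: c' => take p s :: blocks c' (drop p s)
  end.

Section Rprime.
Variables (C : numClosedFieldType) (B : algType C).
Variables (gamma : B -> B) (Lambda : B -> B -> B).
(* Lambda u v stands for Lambda(u (x) v) *)

(* R' with a fuel argument (fuel >= size s suffices) *)
Fixpoint Rp_fuel (fuel : nat) (s : seq B) : B -> B :=
  match fuel with
  | 0 => id
  | fuel'.+1 =>
    let w (blk : seq B) : B -> B :=
      match blk with
      | [::] => id
      | [:: u] => fun x => Lambda u x
      | u :: (t1 :: t') =>
          fun x => gamma (u * Rp_fuel fuel' (belast t1 t') (last t1 t')) * x
      end in
    fun v => \sum_(c <- intpart (size s))
               foldr (fun blk f => fun x => w blk (f x)) id (blocks c s) v
  end.

Definition Rp (s : seq B) : B -> B := Rp_fuel (size s) s.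

(* ---------- Formal series in k non-commuting letters ----------
   A series is given by its coefficients, indexed by words over {1..k}. *)
Variable k : nat.
Definition word := seq 'I_k.

Definition Rser (u : 'I_k -> B) : word -> B -> B := fun w => Rp (map u w).

Definition opapp (F : word -> B -> B) (f : word -> B) : word -> B :=
  fun w => \sum_(i < (size w).+1) F (take i w) (f (drop i w)).

Definition sermul (f g : word -> B) : word -> B :=
  fun w => \sum_(i < (size w).+1) f (take i w) * g (drop i w).

Definition cst (x : B) : word -> B := fun w => if w is [::] then x else 0.

Definition deg1 (c : 'I_k -> B) : word -> B :=
  fun w => if w is [:: i] then c i else 0.

End Rprime.

(* Main.v *)
Require Import Defs.
From HB Require Import structures.
From mathcomp Require Import all_boot all_order all_algebra.
From mathcomp Require Import zify.
Import Order.TTheory GRing.Theory Num.Theory.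
Set Implicit Arguments. Unset Strict Implicit. Unset Printing Implicit Defensive.

Lemma mem_allseqs l m c :
  (c \in allseqs l m) = (size c == l) && all (fun p => 0 < p <= m) c.
Proof.
elim: l c => [|l IH] c.
  by case: c.
apply/idP/idP.
  case/flattenP => x /mapP [p Hp ->] /mapP [c' Hc' ->].
  rewrite IH in Hc'; case/andP: Hc' => /eqP <- Ha.
  by rewrite /= eqxx Ha andbT; rewrite mem_iota in Hp; lia.
case: c => [|a c] //=; rewrite eqSS => /andP [Hs /andP [Ha Hc]].
apply/flattenP; exists [seq a :: c0 | c0 <- allseqs l m].
  by apply/map_f; rewrite mem_iota; lia.
by apply/map_f; rewrite IH Hs.
Qed.

Lemma uniq_allseqs l m : uniq (allseqs l m).
Proof.
elim: l => //= l IH.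
apply: (@allpairs_uniq _ _ _ (fun p c => p :: c) (iota 1 m) (allseqs l m)).
- exact: iota_uniq.
- exact: IH.
- by move=> [a b] [a' b'] _ _ /= [-> ->].
Qed.

Lemma uniq_flat_allseqs m (ls : seq nat) :
  uniq ls -> uniq (flatten [seq allseqs l m | l <- ls]).
Proof.
elim: ls => //= l ls IH /andP [Hl Hu].
rewrite cat_uniq uniq_allseqs IH // andbT /=.
apply/hasPn => c /flattenP [x /mapP [l' Hl' ->]].
rewrite !mem_allseqs => /andP [/eqP Hs _]; apply/negP => /andP [/eqP Hs' _].
by move: Hl; rewrite -Hs' Hs Hl'.
Qed.

Lemma uniq_intpart m : uniq (intpart m).
Proof. by apply: filter_uniq; apply: uniq_flat_allseqs; exact: iota_uniq. Qed.

Lemma size_le_sumn c : all (fun p => 0 < p) c -> size c <= sumn c.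
Proof. elim: c => //= a c IH /andP [Ha Hc]; have := IH Hc; lia. Qed.

Lemma mem_le_sumn c p : p \in c -> p <= sumn c.
Proof.
elim: c => //= a c IH; rewrite in_cons => /orP [/eqP -> | /IH]; lia.
Qed.

Lemma mem_intpart m c : (c \in intpart m) = all (fun p => 0 < p) c && (sumn c == m).
Proof.
rewrite mem_filter; apply/andP/andP => [[/eqP Hs /flattenP [x /mapP [l Hl ->]]] | [Hpos /eqP Hs]].
  rewrite mem_allseqs => /andP [_ Hall]; split; last by rewrite Hs.
  by apply/allP => p /(allP Hall) /andP [].
split; first by rewrite Hs.
apply/flattenP; exists (allseqs (size c) m).
  by apply: (map_f (fun l => allseqs l m)); rewrite mem_iota /= add0n ltnS -Hs size_le_sumn.
rewrite mem_allseqs eqxx /=.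
by apply/allP => p Hp; rewrite (allP Hpos p Hp) /= -Hs; exact: mem_le_sumn.
Qed.

Definition lastenum m :=
  [seq rcons c (m.+1 - i) | i <- iota 0 m.+1, c <- intpart i].

Lemma perm_intpart m : perm_eq (intpart m.+1) (lastenum m).
Proof.
apply: uniq_perm; first exact: uniq_intpart.
  apply: allpairs_uniq_dep; first exact: iota_uniq.
    by move=> i _; exact: uniq_intpart.
  move=> [i c] [i' c'] /allpairsPdep [j [d [Hj Hd [E1 E2]]]] /allpairsPdep [j' [d' [Hj' Hd' [E1' E2']]]] /=.
  subst.
  move=> /eqP; rewrite eqseq_rcons => /andP [/eqP Ec _]; subst.
  move: Hd Hd'; rewrite !mem_intpart => /andP [_ /eqP <-] /andP [_ /eqP <-].
  by [].
move=> c'; rewrite mem_intpart; apply/idP/allpairsPdep.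
  case/lastP: c' => [|c q] //.
  rewrite all_rcons sumn_rcons => /andP [/andP [Hq Hc] /eqP Hs].
  exists (sumn c), c; split.
  - by rewrite mem_iota; lia.
  - by rewrite mem_intpart Hc eqxx.
  - by congr rcons; lia.
move=> [i [c [Hi Hc ->]]]; move: Hc; rewrite mem_intpart mem_iota in Hi *.
move=> /andP [Hc /eqP Hs].
by rewrite all_rcons sumn_rcons Hc Hs andbT; apply/andP; split; lia.
Qed.

Lemma blocks_rcons T c q (s : seq T) : sumn c + q = size s ->
  blocks (rcons c q) s = rcons (blocks c s) (drop (sumn c) s).
Proof.
elim: c s => [|p c IH] s /= H.
  by rewrite drop0 take_oversize // -H.
rewrite IH ?drop_drop ?size_drop; first by rewrite addnC.
lia.
Qed.

Lemma blocks_take T c (s : seq T) n : sumn c <= n -> blocks c (take n s) = blocks c s.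
Proof.
elim: c n s => //= p c IH n s H.
rewrite take_takel; last by lia.
have -> : drop p (take n s) = take (n - p) (drop p s) by rewrite take_drop subnK //; lia.
by rewrite IH //; lia.
Qed.

Lemma blocks_size (T : eqType) c (s : seq T) blk : blk \in blocks c s -> size blk <= size s.
Proof.
elim: c s => //= p c IH s; rewrite in_cons => /orP [/eqP -> | /IH H].
  by rewrite size_take_min geq_minr.
by apply: leq_trans H _; rewrite size_drop leq_subr.
Qed.

Section Ops.
Local Open Scope ring_scope.
Variables (C : numClosedFieldType) (B : algType C).
Variables (gamma : B -> B) (Lambda : B -> B -> B).
Hypothesis Lam0 : forall z, Lambda z 0 = 0.

Local Notation Rpf := (Rp_fuel gamma Lambda).
Local Notation RP := (Rp gamma Lambda).

Definition wf n (blk : seq B) : B -> B :=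
  match blk with
  | [::] => id
  | [:: u] => fun x => Lambda u x
  | u :: (t1 :: t') => fun x => gamma (u * Rpf n (belast t1 t') (last t1 t')) * x
  end.

Definition wR (blk : seq B) : B -> B :=
  match blk with
  | [::] => id
  | [:: u] => fun x => Lambda u x
  | u :: (t1 :: t') => fun x => gamma (u * RP (belast t1 t') (last t1 t')) * x
  end.

Definition fold (W : seq B -> B -> B) l :=
  foldr (fun blk f => fun x => W blk (f x)) id l.

Lemma RpfS n s v :
  Rpf n.+1 s v = \sum_(c <- intpart (size s)) fold (wf n) (blocks c s) v.
Proof. by []. Qed.

Lemma fold_eq W1 W2 l : (forall blk, blk \in l -> W1 blk =1 W2 blk) ->
  fold W1 l =1 fold W2 l.
Proof.
elim: l => //= a l IH H x.
rewrite H ?mem_head //; congr (W2 a); apply: IH => b Hb x'.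
by apply: H; rewrite in_cons Hb orbT.
Qed.

Lemma fold_rcons W l x : fold W (rcons l x) =1 fold W l \o W x.
Proof. by elim: l => //= a l IH y; rewrite IH. Qed.

Lemma Rpf_succ n s : (size s <= n)%N -> Rpf n.+1 s =1 Rpf n s.
Proof.
elim: n s => [|n IH] s Hs v.
  case: s Hs => // _.
  rewrite RpfS /=.
  have -> : intpart 0 = [:: [::]] by [].
  by rewrite big_seq1.
rewrite !RpfS; apply: eq_bigr => c _; apply: fold_eq => blk Hb x.
have := blocks_size Hb.
case: blk Hb => [|a [|t1 t']] // _ Hsz; rewrite /= in Hsz.
rewrite /wf IH // size_belast; lia.
Qed.

Lemma Rpf_Rp n s : (size s <= n)%N -> Rpf n s =1 RP s.
Proof.
move=> H; rewrite /Rp -(subnK H).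
elim: (n - size s)%N => // d IH x.
by rewrite addSn Rpf_succ ?IH // leq_addl.
Qed.

Lemma wf_wR n blk : (size blk <= n.+1)%N -> wf n blk =1 wR blk.
Proof.
case: blk => [|a [|t1 t']] //= H x.
rewrite Rpf_Rp // size_belast; lia.
Qed.

Lemma Rp_last (s : seq B) v : (0 < size s)%N ->
  RP s v = \sum_(i < size s) RP (take i s) (wR (drop i s) v).
Proof.
move=> Hs0; set m := (size s).-1; have Hm : size s = m.+1 by rewrite /m; lia.
have -> : RP s v = Rpf m.+1 s v by rewrite /Rp Hm.
rewrite RpfS Hm (perm_big _ (perm_intpart _)) /lastenum big_allpairs_dep.
have -> : iota 0 m.+1 = index_iota 0 m.+1 by rewrite /index_iota subn0.
rewrite big_mkord; apply: eq_bigr => i _.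
have Hi : (i <= m)%N by have := ltn_ord i; lia.
rewrite -(@Rpf_Rp m.+1); last by rewrite size_take_min; lia.
rewrite RpfS size_takel; last by lia.
rewrite big_seq [RHS]big_seq; apply: eq_bigr => c; rewrite mem_intpart => /andP [_ /eqP Hc].
rewrite blocks_rcons; last by lia.
rewrite fold_rcons /= Hc blocks_take ?Hc // wf_wR // size_drop; lia.
Qed.

Lemma fold0 W l : (forall blk, W blk 0 = 0) -> fold W l 0 = 0.
Proof. by move=> H; elim: l => //= a l ->. Qed.

Lemma Rpf0 n s : Rpf n s 0 = 0.
Proof.
case: n => // n; rewrite RpfS big1 // => c _; apply: fold0.
by case => [|a [|t1 t']] //=; rewrite mulr0.
Qed.

Lemma Rp0 s : RP s 0 = 0.
Proof. exact: Rpf0. Qed.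

End Ops.

Section Ser.
Local Open Scope ring_scope.
Variables (C : numClosedFieldType) (B : algType C) (k : nat).

Lemma deg1_0 (c : 'I_k -> B) (w : word k) : size w != 1%N -> deg1 c w = 0.
Proof. by case: w => [|a [|b t]]. Qed.

Lemma cst_0 (v : B) (w : word k) : size w != 0%N -> cst v w = 0.
Proof. by case: w. Qed.

Variable F : word k -> B -> B.
Hypothesis F0 : forall w, F w 0 = 0.

Lemma opapp_cst v w : opapp F (cst v) w = F w v.
Proof.
rewrite /opapp big_ord_recr /= take_size drop_size /= big1 ?add0r // => i _.
rewrite cst_0 ?F0 // size_drop /=; have := ltn_ord i; lia.
Qed.

Lemma opapp_deg1_nil c : opapp F (deg1 c) [::] = 0.
Proof. by rewrite /opapp big_ord_recl big_ord0 /= F0 addr0. Qed.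

Lemma opapp_deg1_rcons c s x : opapp F (deg1 c) (rcons s x) = F s (c x).
Proof.
rewrite /opapp size_rcons !big_ord_recr /=.
have E1 : take (size s).+1 (rcons s x) = rcons s x by rewrite take_oversize // size_rcons.
have E2 : drop (size s).+1 (rcons s x) = [::] by rewrite drop_oversize // size_rcons.
rewrite E1 E2 F0 addr0.
rewrite -cats1 take_size_cat // drop_size_cat //= big1 ?add0r // => i _.
rewrite deg1_0 ?F0 // size_drop size_cat /=; have := ltn_ord i; lia.
Qed.

Lemma opapp_deg1_cons c b t :
  opapp F (deg1 c) (b :: t) = F (belast b t) (c (last b t)).
Proof. by rewrite lastI opapp_deg1_rcons. Qed.

End Ser.
Local Open Scope ring_scope.

Lemma sermul_deg1_nil (C : numClosedFieldType) (B : algType C) (k : nat)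
  (c : 'I_k -> B) g : sermul (deg1 c) g [::] = 0.
Proof. by rewrite /sermul big_ord_recl big_ord0 /= mul0r addr0. Qed.

Lemma sermul_deg1_cons (C : numClosedFieldType) (B : algType C) (k : nat)
  (c : 'I_k -> B) g a t : sermul (deg1 c) g (a :: t) = c a * g t.
Proof.
rewrite /sermul [size (_ :: _)]/= !big_ord_recl /= mul0r add0r.
rewrite !add0n take0 drop0 big1 ?addr0 // => i _.
case E: (take _ t) => [|y ys]; last by rewrite mul0r.
move/(f_equal size): E; rewrite size_take_min /bump /=; have := ltn_ord i; lia.
Qed.

Theorem corollary3p14
  (C : numClosedFieldType) (B : algType C)
  (star : B -> B)
  (star_add : forall x y, star (x + y) = star x + star y)
  (star_scale : forall (a : C) x, star (a *: x) = a^* *: star x)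
  (star_mul : forall x y, star (x * y) = star y * star x)
  (star_invol : forall x, star (star x) = x)
  (gamma : B -> B) (Lambda : B -> B -> B)
  (gamma_lin : forall (a : C) x y, gamma (a *: x + y) = a *: gamma x + gamma y)
  (gamma_star : forall x, gamma (star x) = star (gamma x))
  (Lambda_linl : forall (a : C) x y z,
      Lambda (a *: x + y) z = a *: Lambda x z + Lambda y z)
  (Lambda_linr : forall (a : C) x y z,
      Lambda z (a *: x + y) = a *: Lambda z x + Lambda z y)
  (Lambda_star : forall x y, Lambda (star x) (star y) = star (Lambda x y))
  (k : nat) (u : 'I_k -> B) (v : B) :
  let R := Rser gamma Lambda u in
  let X := deg1 u in
  forall w : word k,
    opapp R (cst v) w =
      cst v w
      + opapp R (fun w' => gamma (sermul X (opapp R X) w') * v) w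
      + opapp R (deg1 (fun i => Lambda (u i) v)) w.
Proof.
move=> R X w; subst R X.
have gam0 : gamma 0 = 0.
  have := gamma_lin 1 0 0; rewrite scaler0 scale1r addr0 => H.
  have : gamma 0 + gamma 0 - gamma 0 = gamma 0 - gamma 0 by rewrite -H.
  by rewrite addrK subrr.
have Lam0 : forall z, Lambda z 0 = 0.
  move=> z; have := Lambda_linr 1 0 0 z; rewrite scaler0 scale1r addr0 => H.
  have : Lambda z 0 + Lambda z 0 - Lambda z 0 = Lambda z 0 - Lambda z 0 by rewrite -H.
  by rewrite addrK subrr.
have R0 : forall p, Rser gamma Lambda u p 0 = 0 by move=> p; exact: Rp0.
have gv0 : (0 : B) * v = 0 by rewrite mul0r.
have comb : forall p w', Rser gamma Lambda u p (gamma (sermul (deg1 u) (opapp (Rser gamma Lambda u) (deg1 u)) w') * v)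
      + Rser gamma Lambda u p (deg1 (fun i => Lambda (u i) v) w')
    = if w' is [::] then 0
      else Rp gamma Lambda (map u p) (wR gamma Lambda (map u w') v).
  move=> p [|a [|b t]].
  - by rewrite sermul_deg1_nil gam0 gv0 R0 addr0.
  - by rewrite sermul_deg1_cons opapp_deg1_nil // mulr0 gam0 gv0 R0 add0r.
  - rewrite sermul_deg1_cons opapp_deg1_cons // deg1_0 // R0 addr0 /=.
    by rewrite belast_map last_map.
rewrite opapp_cst // /opapp -addrA -big_split /=.
under eq_bigr do rewrite comb.
rewrite big_ord_recr /= drop_size addr0.
case: w => [|a t].
  by rewrite big_ord0 addr0.
rewrite /= add0r /Rser Rp_last ?size_map //= big_ord_recl /=.
rewrite [in RHS]big_ord_recl /=; congr (_ + _).
apply: eq_bigr => i _.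
case E: (drop _ t) => [|y ys].
  move/(f_equal size): E; rewrite size_drop /bump /=; have := ltn_ord i; lia.
by rewrite -E map_take map_drop.
Qed.
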